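(* Let $X$ be a toric Fano variety. If $\Sigma_X$ has two different primitive relations $x+y=z$ and $x+w=v$ (with $x,y,z,w,v\in G(\Sigma_X)$), then $w=-x-y$ and $v=-y$. Consequently there are at most two primitive collections of order $2$ and degree $1$ containing $x$, and if there are two, say $\{x,y\}$ and $\{x,w\}$, the associated primitive relations are $x+y=(-w)$ and $x+w=(-y)$.
   Context: $X$ is a smooth projective toric variety with ample anticanonical divisor, fan $\Sigma_X$, primitive ray generators $G(\Sigma_X)$. A primitive collection is a set of generators not spanning a cone of $\Sigma_X$ while every proper subset does; for $\{x_1,\dots,x_h\}$ with $x_1+\dots+x_h$ in the relative interior of the cone $\langle y_1,\dots,y_k\rangle$, the primitive relation is $x_1+\dots+x_h=a_1y_1+\dots+a_ky_k$ ($a_i$ positive integers) and the degree is $h-\sum a_i$. ''$x+y=z$ is a primitive relation'' means $\{x,y\}$ is a primitive collection with this relation. *)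

(* Defs.v *)
From HB Require Import structures.
From mathcomp Require Import all_boot all_order all_algebra.
Set Implicit Arguments. Unset Strict Implicit. Unset Printing Implicit Defensive.
Import Order.TTheory GRing.Theory Num.Theory.
Local Open Scope ring_scope.

(* The rays are indexed by a
   finite type T, with primitive generators g i : 'rV[int]_n.  Since a smooth
   fan is simplicial, each cone is determined by its set of rays; C is the set
   of (ray-index sets of) all cones of the fan. *)

Definition gq (n : nat) (T : finType) (g : T -> 'rV[int]_n) (i : T) : 'rV[rat]_n :=
  map_mx (fun z : int => z%:~R) (g i).

Definition in_cone (n : nat) (T : finType) (g : T -> 'rV[int]_n) (s : {set T})
  (v : 'rV[rat]_n) : Prop :=
  exists c : T -> rat, (forall i, 0 <= c i) /\ v = \sum_(i in s) c i *: gq g i.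

Definition dotq (n : nat) (u v : 'rV[rat]_n) : rat := \sum_(k < n) u 0 k * v 0 k.

Definition smooth_complete_fan (n : nat) (T : finType) (g : T -> 'rV[int]_n)
  (C : {set {set T}}) : Prop :=
  [/\ injective g,
      (forall i : T, [set i] \in C) /\
      (forall s t : {set T}, s \in C -> t \subset s -> t \in C),
      (* smoothness: the generators of each cone are part of a Z-basis of Z^n *)
      (forall s, s \in C -> exists M : 'M[int]_n,
           M \in unitmx /\ forall i, i \in s -> exists k, row k M = g i),
      (* fan axiom: two cones meet in a common face *)
      (forall s t v, s \in C -> t \in C -> in_cone g s v -> in_cone g t v ->
           in_cone g (s :&: t) v)
    &
      (forall v : 'rV[rat]_n, exists2 s, s \in C & in_cone g s v)].

(* -K_X = sum of all torus-invariant prime divisors is ample: its support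
   function is strictly convex, i.e. for every maximal (n-dimensional) cone s
   there is m_s with <m_s, v_i> = 1 on the rays of s and < 1 on all other rays. *)
Definition anticanonical_ample (n : nat) (T : finType) (g : T -> 'rV[int]_n)
  (C : {set {set T}}) : Prop :=
  forall s, s \in C -> #|s| = n ->
    exists u : 'rV[rat]_n,
      (forall i, i \in s -> dotq u (gq g i) = 1) /\
      (forall j, j \notin s -> dotq u (gq g j) < 1).

Definition toric_fano (n : nat) (T : finType) (g : T -> 'rV[int]_n)
  (C : {set {set T}}) : Prop :=
  smooth_complete_fan g C /\ anticanonical_ample g C.

Definition prim_coll (T : finType) (C : {set {set T}}) (P : {set T}) : Prop :=
  P \notin C /\ forall Q : {set T}, Q \proper P -> Q \in C.

(* primitive relation  sum_{i in P} x_i = sum_{j in t} a_j y_j  with the sum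
   in the relative interior of the cone t (all a_j positive integers). *)
Definition prim_rel (n : nat) (T : finType) (g : T -> 'rV[int]_n)
  (C : {set {set T}}) (P t : {set T}) (a : T -> nat) : Prop :=
  [/\ prim_coll C P, t \in C, (forall j, j \in t -> (0 < a j)%N)
    & \sum_(i in P) g i = \sum_(j in t) (a j)%:Z *: g j].

Definition prim_degree (T : finType) (P t : {set T}) (a : T -> nat) : int :=
  (#|P|%:Z - (\sum_(j in t) a j)%:Z)%R.

Definition prim_rel2 (n : nat) (T : finType) (g : T -> 'rV[int]_n)
  (C : {set {set T}}) (x y z : T) : Prop :=
  prim_rel g C [set x; y] [set z] (fun _ => 1%N).

Definition prim_coll_ord2_deg1 (n : nat) (T : finType) (g : T -> 'rV[int]_n)
  (C : {set {set T}}) (P : {set T}) : Prop :=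
  #|P| = 2%N /\ exists t a, prim_rel g C P t a /\ prim_degree P t a = 1.

(* Main.v *)
Require Import Defs.
From HB Require Import structures.
From mathcomp Require Import all_boot all_order all_algebra.
From mathcomp Require Import zify ring lra.
Set Implicit Arguments. Unset Strict Implicit. Unset Printing Implicit Defensive.
Import Order.TTheory GRing.Theory Num.Theory.
Local Open Scope ring_scope.

Definition qv n (V : 'rV[int]_n) : 'rV[rat]_n := map_mx (@intmul rat 1) V.

Lemma gqE n (T : finType) (g : T -> 'rV[int]_n) i : gq g i = qv (g i).
Proof. by []. Qed.

Lemma qv0 n : qv (0 : 'rV[int]_n) = 0.
Proof. exact: map_mx0. Qed.
Lemma qvD n (a b : 'rV[int]_n) : qv (a + b) = qv a + qv b.
Proof. exact: map_mxD. Qed.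
Lemma qvN n (a : 'rV[int]_n) : qv (- a) = - qv a.
Proof. exact: map_mxN. Qed.
Lemma qvB n (a b : 'rV[int]_n) : qv (a - b) = qv a - qv b.
Proof. by rewrite qvD qvN. Qed.
Lemma qvMn n (a : 'rV[int]_n) m : qv (a *+ m) = qv a *+ m.
Proof. by elim: m => [|m IH]; rewrite ?mulr0n ?qv0 // !mulrS qvD IH. Qed.
Lemma qv_inj n : injective (@qv n).
Proof.
move=> A B /matrixP eqAB; apply/matrixP => i j.
by have := eqAB i j; rewrite !mxE => /intr_inj.
Qed.

Definition crd n (M : 'M[int]_n) (V : 'rV[rat]_n) : 'rV[rat]_n :=
  V *m map_mx (@intmul rat 1) (invmx M).

Lemma crdD n (M : 'M[int]_n) a b : crd M (a + b) = crd M a + crd M b.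
Proof. by rewrite /crd mulmxDl. Qed.
Lemma crdZ n (M : 'M[int]_n) c a : crd M (c *: a) = c *: crd M a.
Proof. by rewrite /crd scalemxAl. Qed.
Lemma crd_sum n (M : 'M[int]_n) (I : finType) (P : pred I) F :
  crd M (\sum_(i | P i) F i) = \sum_(i | P i) crd M (F i).
Proof. by rewrite /crd mulmx_suml. Qed.
Lemma crd0 n (M : 'M[int]_n) : crd M 0 = 0.
Proof. by rewrite /crd mul0mx. Qed.
Lemma crd_qv n (M : 'M[int]_n) V : crd M (qv V) = qv (V *m invmx M).
Proof. by rewrite /crd /qv map_mxM. Qed.

Lemma crd_row n (M : 'M[int]_n) j : M \in unitmx ->
  crd M (qv (row j M)) = row j 1%:M.
Proof.
move=> uM; rewrite crd_qv -row_mul mulmxV // /qv.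
by apply/rowP => k; rewrite !mxE; case: (j == k).
Qed.

Lemma crdK n (M : 'M[int]_n) V : M \in unitmx ->
  crd M V *m map_mx (@intmul rat 1) M = V.
Proof.
move=> uM; rewrite /crd -mulmxA -map_mxM mulVmx //.
by rewrite map_mx1 mulmx1.
Qed.

Lemma mxD_entry (V : nmodType) m n (A B : 'M[V]_(m, n)) i j :
  (A + B) i j = A i j + B i j.
Proof. by rewrite mxE. Qed.

Definition chart n (T : finType) (g : T -> 'rV[int]_n) (s : {set T})
  (M : 'M[int]_n) (k : T -> 'I_n) :=
  M \in unitmx /\ forall i, i \in s -> row (k i) M = g i.

Lemma chart_ex n (T : finType) (g : T -> 'rV[int]_n) (C : {set {set T}}) s
  (k0 : 'I_n) : smooth_complete_fan g C -> s \in C ->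
  exists M k, chart g s M k.
Proof.
case=> _ _ sm _ _ sC; have [M [uM hM]] := sm s sC.
exists M, (fun i => odflt k0 [pick j | row j M == g i]); split=> // i iS.
case: pickP => [j /eqP //|H]; have [j hj] := hM i iS.
by move: (H j); rewrite hj eqxx.
Qed.

Lemma chart_inj n (T : finType) (g : T -> 'rV[int]_n) s M k :
  injective g -> chart g s M k -> {in s &, injective k}.
Proof.
move=> ig [_ hM] i j iS js e; apply: ig.
by rewrite -(hM i iS) -(hM j js) e.
Qed.

Lemma crd_g n (T : finType) (g : T -> 'rV[int]_n) s M k i j :
  chart g s M k -> i \in s -> crd M (gq g i) 0 j = (k i == j)%:R.
Proof.
move=> [uM hM] iS; rewrite gqE -(hM i iS) crd_row // !mxE.
by case: (k i == j).
Qed.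

Lemma crd_cone n (T : finType) (g : T -> 'rV[int]_n) s M k (c : T -> rat) j :
  chart g s M k ->
  crd M (\sum_(i in s) c i *: gq g i) 0 j = \sum_(i in s) c i * (k i == j)%:R.
Proof.
move=> ch; rewrite crd_sum summxE; apply: eq_bigr => i iS.
by rewrite crdZ mxE (crd_g _ ch iS).
Qed.

Lemma crd_cone_at n (T : finType) (g : T -> 'rV[int]_n) s M k (c : T -> rat) i0 :
  injective g -> chart g s M k -> i0 \in s ->
  crd M (\sum_(i in s) c i *: gq g i) 0 (k i0) = c i0.
Proof.
move=> ig ch i0s; rewrite (crd_cone _ _ ch) (bigD1 i0) //= eqxx mulr1 big1 ?addr0 //.
move=> i /andP [iS ne]; case: eqP; last by rewrite mulr0.
by move/(chart_inj ig ch iS i0s) => e; rewrite e eqxx in ne.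
Qed.

Lemma crd_cone_out n (T : finType) (g : T -> 'rV[int]_n) s M k (c : T -> rat) j :
  chart g s M k -> j \notin k @: s ->
  crd M (\sum_(i in s) c i *: gq g i) 0 j = 0.
Proof.
move=> ch nj; rewrite (crd_cone _ _ ch) big1 // => i iS.
case: eqP; last by rewrite mulr0.
by move=> e; move: nj; rewrite -e imset_f.
Qed.

Lemma cone_indep n (T : finType) (g : T -> 'rV[int]_n) s M k (c d : T -> rat) :
  injective g -> chart g s M k ->
  \sum_(i in s) c i *: gq g i = \sum_(i in s) d i *: gq g i ->
  forall i, i \in s -> c i = d i.
Proof.
move=> ig ch e i iS.
by rewrite -(crd_cone_at c ig ch iS) -(crd_cone_at d ig ch iS) e.
Qed.

Lemma gq_neq0 n (T : finType) (g : T -> 'rV[int]_n) (C : {set {set T}}) i :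
  smooth_complete_fan g C -> gq g i != 0.
Proof.
move=> H; have sC : [set i] \in C by case: H => _ [h _] _ _ _; exact: h.
case: H => _ _ sm _ _; have [M [uM hM]] := sm _ sC.
have [k hk] := hM i (set11 i).
apply/eqP => e; have := crd_row k uM; rewrite hk -gqE e crd0 => /rowP/(_ k).
by rewrite !mxE eqxx => /eqP; rewrite eq_sym oner_eq0.
Qed.

Lemma dotqE n (u V : 'rV[rat]_n) : dotq u V = (V *m u^T) 0 0.
Proof. by rewrite /dotq mxE; apply: eq_bigr => k _; rewrite mxE mulrC. Qed.

Lemma dotqD n (u a b : 'rV[rat]_n) : dotq u (a + b) = dotq u a + dotq u b.
Proof. by rewrite !dotqE mulmxDl mxE. Qed.
Lemma dotqZ n (u a : 'rV[rat]_n) c : dotq u (c *: a) = c * dotq u a.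
Proof. by rewrite !dotqE -scalemxAl mxE. Qed.
Lemma dotq_sum n (u : 'rV[rat]_n) (I : finType) (P : pred I) F :
  dotq u (\sum_(i | P i) F i) = \sum_(i | P i) dotq u (F i).
Proof. by rewrite dotqE mulmx_suml summxE; apply: eq_bigr => i _; rewrite dotqE. Qed.
Lemma dotq0 n (u : 'rV[rat]_n) : dotq u 0 = 0.
Proof. by rewrite dotqE mul0mx mxE. Qed.
Lemma dotqMn n (u a : 'rV[rat]_n) m : dotq u (a *+ m) = dotq u a *+ m.
Proof. by elim: m => [|m IH]; rewrite ?mulr0n ?dotq0 // !mulrS dotqD IH. Qed.

Definition ufor n (T : finType) (g : T -> 'rV[int]_n) (s : {set T}) u :=
  (forall i, i \in s -> dotq u (gq g i) = 1) /\
  (forall j, j \notin s -> dotq u (gq g j) < 1).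

Lemma u_cone n (T : finType) (g : T -> 'rV[int]_n) s u (c : T -> rat) :
  ufor g s u -> dotq u (\sum_(i in s) c i *: gq g i) = \sum_(i in s) c i.
Proof.
move=> [h1 _]; rewrite dotq_sum; apply: eq_bigr => i iS.
by rewrite dotqZ h1 // mulr1.
Qed.

Lemma u_le1 n (T : finType) (g : T -> 'rV[int]_n) s u r :
  ufor g s u -> dotq u (gq g r) <= 1.
Proof.
move=> [h1 h2]; case: (boolP (r \in s)) => rs; first by rewrite h1.
exact: ltW (h2 r rs).
Qed.

Lemma u_eq1 n (T : finType) (g : T -> 'rV[int]_n) s u r :
  ufor g s u -> dotq u (gq g r) = 1 -> r \in s.
Proof.
move=> [h1 h2] e; apply/negPn/negP => rs.
by have := h2 r rs; rewrite e ltxx.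
Qed.

Lemma u_sum2 n (T : finType) (g : T -> 'rV[int]_n) s u a b :
  ufor g s u -> dotq u (gq g a + gq g b) = 2 -> a \in s /\ b \in s.
Proof.
move=> h; rewrite dotqD => e.
have ha := u_le1 a h; have hb := u_le1 b h.
have ea : dotq u (gq g a) = 1 by apply/eqP; rewrite eq_le ha /=; lra.
have eb : dotq u (gq g b) = 1 by apply/eqP; rewrite eq_le hb /=; lra.
by split; apply: (u_eq1 h).
Qed.

Lemma bound_seq (A : eqType) (P : A -> nat -> Prop) (l : seq A) :
  (forall t B B', (B <= B')%N -> P t B -> P t B') ->
  (forall t, t \in l -> exists B, P t B) -> exists B, forall t, t \in l -> P t B.
Proof.
move=> mono; elim: l => [|a l IH] h; first by exists 0%N.
have [B1 h1] := h a (mem_head a l).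
have [B2 h2] : exists B, forall t, t \in l -> P t B.
  by apply: IH => t tl; apply: h; rewrite in_cons tl orbT.
exists (maxn B1 B2) => t; rewrite in_cons => /orP [/eqP -> | tl].
  by apply: mono h1; apply: leq_maxl.
by apply: mono (h2 t tl); apply: leq_maxr.
Qed.

Lemma crdMn n (M : 'M[int]_n) a m : crd M (a *+ m) = crd M a *+ m.
Proof. by elim: m => [|m IH]; rewrite ?mulr0n ?crd0 // !mulrS crdD IH. Qed.

Lemma crd_qv_entry n (M : 'M[int]_n) (V : 'rV[int]_n) j :
  crd M (qv V) 0 j = ((V *m invmx M) 0 j)%:~R.
Proof. by rewrite crd_qv mxE. Qed.

Lemma cone_limit n (T : finType) (g : T -> 'rV[int]_n) (C : {set {set T}}) t
  (p d : 'rV[int]_n) (k0 : 'I_n) :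
  smooth_complete_fan g C -> t \in C ->
  exists B : nat, forall K : nat, (B < K)%N ->
    in_cone g t (qv (p *+ K + d)) -> in_cone g t (qv p).
Proof.
move=> H tC; have ig : injective g by case: H.
have [M [k ch]] := chart_ex k0 H tC.
have uM : M \in unitmx by case: ch.
have ik := chart_inj ig ch.
pose a := p *m invmx M; pose b := d *m invmx M.
exists (\sum_(j < n) absz (b 0%R j))%N => K hK [c [c0 e]].
have hX : forall j, crd M (qv (p *+ K + d)) 0 j = (a 0 j *+ K + b 0 j)%:~R.
  move=> j; rewrite crd_qv_entry mulmxDl mxE.
  suff -> : p *+ K *m invmx M = a *+ K by rewrite mulmxnE.
  by rewrite /a; elim: (K) => [|m IH]; rewrite ?mulr0n ?mul0mx // !mulrS mulmxDl IH.
have hcone j : crd M (qv (p *+ K + d)) 0 j = \sum_(i in t) c i * (k i == j)%:R.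
  by rewrite e (crd_cone _ _ ch).
have bj (j : 'I_n) : (absz (b 0%R j) < K)%N.
  apply: leq_ltn_trans hK; rewrite (bigD1 j) //=; exact: leq_addr.
have a0 j : 0 <= a 0 j.
  have : 0 <= crd M (qv (p *+ K + d)) 0 j.
    by rewrite hcone; apply: sumr_ge0 => i _; apply: mulr_ge0 => //; apply: ler0n.
  rewrite hX ler0z => h; have := bj j; rewrite -mulr_natr in h; nia.
have aout j : j \notin k @: t -> a 0 j = 0.
  move=> nj; have := crd_cone_out c ch nj; rewrite -e hX => /eqP; rewrite intr_eq0 => /eqP h.
  have := bj j; rewrite -mulr_natr in h; nia.
exists (fun i => (a 0 (k i))%:~R); split; first by move=> i; rewrite ler0z.
rewrite -(crdK (qv p) uM) crd_qv -/a mulmx_sum_row.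
rewrite (bigID (mem (k @: t))) /= [X in _ + X]big1 ?addr0; last first.
  by move=> j /aout h; rewrite mxE h scale0r.
rewrite (eq_bigl (fun j => j \in k @: t)) // big_imset //.
apply: eq_bigr => i it; rewrite mxE; congr (_ *: _).
by rewrite -map_row; case: ch => _ ->.
Qed.

Lemma in_cone_restrict n (T : finType) (g : T -> 'rV[int]_n) s t (c : T -> rat) :
  \sum_(i in s :&: t) c i *: gq g i =
  \sum_(i in s) (if i \in t then c i else 0) *: gq g i.
Proof.
rewrite (eq_bigl (fun i => (i \in s) && (i \in t))); last by move=> i; rewrite in_setI.
rewrite big_mkcondr /=; apply: eq_bigr => i _.
by case: (i \in t); rewrite ?scale0r.
Qed.

Lemma extend n (T : finType) (g : T -> 'rV[int]_n) (C : {set {set T}}) s0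
  (k0 : 'I_n) : smooth_complete_fan g C -> s0 \in C ->
  exists s, [/\ s \in C, s0 \subset s & #|s| = n].
Proof.
move=> H s0C; have ig : injective g by case: H.
have P0 : (s0 \in C) && (s0 \subset s0) by rewrite s0C subxx.
case: (@arg_maxnP _ s0 (fun s => (s \in C) && (s0 \subset s)) (fun s : {set T} => #|s|) P0) => s /andP [sC s0s] maxs.
exists s; split => //.
have [M [k ch]] := chart_ex k0 H sC.
have uM : M \in unitmx by case: ch.
have ik := chart_inj ig ch.
have le : (#|s| <= n)%N.
  by rewrite -(card_in_imset ik) -[X in (_ <= X)%N](card_ord n) max_card.
apply/eqP; rewrite eqn_leq le /=; rewrite leqNgt; apply/negP => lt.
have [j nj] : exists j, j \notin k @: s.
  case: (pickP [pred j | j \notin k @: s]) => [j hj | Hn]; first by exists j.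
  suff : (n <= #|k @: s|)%N by rewrite (card_in_imset ik) leqNgt lt.
  rewrite -[X in (X <= _)%N](card_ord n); apply: subset_leq_card.
  by apply/subsetP => i _; have := Hn i; rewrite /= => /negbFE.
pose d := row j M; pose p := \sum_(i in s) g i.
have [B hB] : exists B : nat, forall t, t \in enum C -> forall K : nat, (B < K)%N ->
    in_cone g t (qv (p *+ K + d)) -> in_cone g t (qv p).
  apply: (bound_seq (P := fun t B => forall K : nat, (B < K)%N ->
    in_cone g t (qv (p *+ K + d)) -> in_cone g t (qv p))).
    by move=> t B1 B2 le12 h K hK; apply: h; apply: leq_ltn_trans hK.
  move=> t; rewrite mem_enum => tC; exact: cone_limit k0 H tC.
have [t tC ct] : exists2 t, t \in C & in_cone g t (qv (p *+ B.+1 + d)).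
  by case: H => _ _ _ _ /(_ (qv (p *+ B.+1 + d))).
have tE : t \in enum C by rewrite mem_enum.
have cp := hB t tE B.+1 (ltnSn B) ct.
have ps : qv p = \sum_(i in s) 1 *: gq g i.
  by rewrite /p /qv map_mx_sum; apply: eq_bigr => i _; rewrite scale1r.
have cs : in_cone g s (qv p) by exists (fun _ => 1).
have [c' [c'0 e']] : in_cone g (s :&: t) (qv p).
  by case: H => _ _ _ /(_ s t (qv p) sC tC cs cp).
have st : s \subset t.
  apply/subsetP => i iS.
  have := cone_indep ig ch (etrans (esym ps) (etrans e' (in_cone_restrict _ _ _ _))) iS.
  by case: (i \in t) => //= /eqP; rewrite oner_eq0.
have nst : s != t.
  apply/eqP => est; move: ct; rewrite -est => -[c [_ e]].
  have := crd_cone_out c ch nj; rewrite -e qvD crdD qvMn crdMn mxE mulmxnE.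
  rewrite ps (crd_cone_out _ ch nj) mul0rn add0r /d crd_row // !mxE eqxx.
  by move/eqP; rewrite oner_eq0.
have := maxs t; rewrite tC (subset_trans s0s st) => /(_ isT).
have : s \proper t by rewrite properEneq nst st.
move/proper_card; rewrite /geq; lia.
Qed.

Lemma max_of_cone n (T : finType) (g : T -> 'rV[int]_n) (C : {set {set T}}) s0
  (k0 : 'I_n) : toric_fano g C -> s0 \in C ->
  exists s u M k, [/\ s \in C, s0 \subset s, ufor g s u & chart g s M k].
Proof.
move=> [H A] s0C; have [s [sC s0s cs]] := extend k0 H s0C.
have [u [u1 u2]] := A s sC cs.
have [M [k ch]] := chart_ex k0 H sC.
by exists s, u, M, k; split.
Qed.

Lemma max_of_vec n (T : finType) (g : T -> 'rV[int]_n) (C : {set {set T}}) V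
  (k0 : 'I_n) : toric_fano g C ->
  exists s u M k (c : T -> rat), [/\ s \in C, ufor g s u, chart g s M k,
     (forall i, 0 <= c i) & V = \sum_(i in s) c i *: gq g i].
Proof.
move=> F; have [H A] := F.
have [s0 s0C [c0 [c00 e0]]] : exists2 s0, s0 \in C & in_cone g s0 V by case: H.
have [s [u [M [k [sC s0s us ch]]]]] := max_of_cone k0 F s0C.
exists s, u, M, k, (fun i => if i \in s0 then c0 i else 0); split => //.
  by move=> i; case: (i \in s0).
rewrite e0 [RHS]big_mkcond [LHS]big_mkcond /=; apply: eq_bigr => i _.
case: (boolP (i \in s0)) => h; first by rewrite (subsetP s0s i h).
by rewrite scale0r; case: (i \in s).
Qed.

Definition valid n (T : finType) (g : T -> 'rV[int]_n) (C : {set {set T}}) x y w :=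
  exists z v, [/\ g x + g y = g z, g x + g w = g v, [set x; y] \notin C,
     [set x; w] \notin C & y != w].

Lemma g_neq0 n (T : finType) (g : T -> 'rV[int]_n) (C : {set {set T}}) i :
  toric_fano g C -> g i != 0.
Proof.
move=> [H _]; apply/eqP => e; have := gq_neq0 i H.
by rewrite gqE e qv0 eqxx.
Qed.

Lemma addr_eq_r (V : zmodType) (a b : V) : a + b = b -> a = 0.
Proof. by move/(congr1 (fun t => t - b)); rewrite addrK subrr. Qed.

Lemma qv_eq n (a b : 'rV[int]_n) : a = b -> qv a = qv b.
Proof. by move=> ->. Qed.

Lemma step n (T : finType) (g : T -> 'rV[int]_n) (C : {set {set T}}) x y w
  (k0 : 'I_n) : toric_fano g C -> valid g C x y w ->
  g x + g y + g w != 0 -> exists t, g t = g x + g y + g w.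
Proof.
move=> F [z [v [exy exw nxy nxw yw]]] S0.
have ig : injective g by case: F => [[]].
set S := g x + g y + g w.
have [s [u [M [k [c [sC us ch c0 e]]]]]] := max_of_vec (qv S) k0 F.
have ik := chart_inj ig ch.
pose m : T -> int := fun i => (S *m invmx M) 0 (k i).
have cm : forall i, i \in s -> c i = (m i)%:~R.
  by move=> i iS; rewrite -(crd_cone_at c ig ch iS) -e crd_qv_entry.
have m0 : forall i, i \in s -> 0 <= m i.
  by move=> i iS; rewrite -(ler_int rat) -cm.
clearbody m.
pose N := \sum_(i in s) m i.
have dN : dotq u (qv S) = N%:~R.
  rewrite e (u_cone _ us) /N rmorph_sum /=; apply: eq_bigr => i iS; exact: cm.
have Szw : qv S = gq g z + gq g w by rewrite /S exy qvD.
have Syv : qv S = gq g y + gq g v by rewrite /S -addrA addrCA exw qvD.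
have N2 : N%:~R <= 2 :> rat.
  rewrite -dN Szw dotqD; have := u_le1 z us; have := u_le1 w us; lra.
have N0 : 0 <= N by apply: sumr_ge0.
have [N3|] : (N == 0) \/ (N == 1) \/ (N == 2).
  - have : N <= 2 by rewrite -(ler_int rat).
    lia.
  -
    exfalso; move: S0; rewrite -(inj_eq (@qv_inj n)) qv0 e big1 ?eqxx // => i iS.
    rewrite cm // (psumr_eq0P m0 (eqP N3) iS) scale0r //.
  case => [N1 | N2'].
  - have [i0 i0s mi0] : exists2 i0, i0 \in s & m i0 != 0.
      case: (pickP [pred i | (i \in s) && (m i != 0)]) => [i0 /andP [h1 h2] | Hn].
        by exists i0.
      have : N = 0.
        rewrite /N big1 // => i iS; have := Hn i; rewrite /= iS /=.
        by move/negbFE/eqP.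
      by move=> h; move: N1; rewrite h.
    move: N1; rewrite /N (bigD1 i0) //= => /eqP h.
    have r0 : 0 <= \sum_(i in s | i != i0) m i.
      by apply: sumr_ge0 => i /andP [iS _]; apply: m0.
    have h0 := m0 i0 i0s.
    have [R eR] : exists R : int, R = \sum_(i in s | i != i0) m i by eexists.
    rewrite -eR in h r0.
    have mi1 : m i0 = 1 by lia.
    have r00 : \sum_(i in s | i != i0) m i = 0 by rewrite -eR; lia.
    exists i0; apply: qv_inj; rewrite e (bigD1 i0) //= big1 ?addr0.
      by rewrite cm // mi1 scale1r.
    move=> i /andP [iS ni]; rewrite cm //.
    have -> : m i = 0.
      apply: (psumr_eq0P _ r00); first by move=> j /andP [jS _]; apply: m0.
      by rewrite iS ni.
    by rewrite scale0r.
  - have h2 : dotq u (gq g z + gq g w) = 2 by rewrite -Szw dN (eqP N2').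
    have [zs ws] := u_sum2 us h2.
    have h2' : dotq u (gq g y + gq g v) = 2 by rewrite -Syv dN (eqP N2').
    have [ys vs] := u_sum2 us h2'.
    have yz : y != z.
      apply/eqP => h; move: exy; rewrite h => /addr_eq_r hx.
      by have := g_neq0 x F; rewrite hx eqxx.
    have vz : v != z.
      apply/eqP => h; move: exw; rewrite h -exy => /addrI/ig hw.
      by rewrite hw eqxx in yw.
    have := congr1 (fun V => crd M V 0 (k z)) (etrans (esym Szw) Syv).
    rewrite /= !crdD !mxD_entry !(crd_g _ ch) // eqxx.
    rewrite (inj_in_eq ik ys zs) (inj_in_eq ik vs zs) (negbTE yz) (negbTE vz).
    by case: (k w == k z) => /=; lra.
Qed.

Lemma lin_a (a b c d : int) : a = b + c + d -> b + a = 0 -> c + d = a + a.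
Proof. lia. Qed.
Lemma lin_b (a b c d e : int) : a = b + c + d -> b + d = e -> c + e = a.
Proof. lia. Qed.

Lemma sing_in n (T : finType) (g : T -> 'rV[int]_n) (C : {set {set T}}) i :
  toric_fano g C -> [set i] \in C.
Proof. by case=> [[_ [h _] _ _ _] _]. Qed.

Lemma claim n (T : finType) (g : T -> 'rV[int]_n) (C : {set {set T}}) x y w t
  (k0 : 'I_n) : toric_fano g C -> valid g C x y w ->
  g t = g x + g y + g w -> g x + g t != 0.
Proof.
move=> F [z [v [exy exw nxy nxw yw]]] et.
have ig : injective g by case: F => [[]].
apply/eqP => h.
have eyw : g y + g w = g t + g t.
  apply/rowP => j; move/rowP/(_ j): h; move/rowP/(_ j): et; rewrite !mxE; exact: lin_a.
have [s [u [M [k [sC ts us ch]]]]] := max_of_cone k0 F (sing_in t F).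
have tS : t \in s by rewrite -sub1set.
have ik := chart_inj ig ch.
have ut : dotq u (gq g t) = 1 by case: us => h1 _; apply: h1.
have e2 : gq g y + gq g w = gq g t + gq g t by rewrite !gqE -!qvD eyw.
have h2 : dotq u (gq g y + gq g w) = 2 by rewrite e2 dotqD ut.
have [ys ws] := u_sum2 us h2.
have yt : y != t.
  apply/eqP => hy; move: eyw; rewrite hy => /addrI /ig hw.
  by move: yw; rewrite hy hw eqxx.
have wt : w != t.
  apply/eqP => hw; move: eyw; rewrite hw => /addIr /ig hy.
  by move: yw; rewrite hy hw eqxx.
have := congr1 (fun V => crd M V 0 (k t)) e2.
rewrite /= !crdD !mxD_entry !(crd_g _ ch) // eqxx.
rewrite (inj_in_eq ik ys tS) (inj_in_eq ik ws tS) (negbTE yt) (negbTE wt) /=.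
lra.
Qed.

Lemma next n (T : finType) (g : T -> 'rV[int]_n) (C : {set {set T}}) x y w t
  (k0 : 'I_n) : toric_fano g C -> valid g C x y w ->
  g t = g x + g y + g w -> exists v, g x + g w = g v /\ valid g C y x v.
Proof.
move=> F [z [v [exy exw nxy nxw yw]]] et; exists v; split => //.
have ig : injective g by case: F => [[]].
exists z, t; split.
- by rewrite addrC.
- apply/rowP => j; move/rowP/(_ j): exw; move/rowP/(_ j): et; rewrite !mxE; exact: lin_b.
- by rewrite setUC.
- apply/negP => yvC.
  have [s [u [M [k [sC yvs us ch]]]]] := max_of_cone k0 F yvC.
  have ys : y \in s by apply: (subsetP yvs); rewrite !inE eqxx.
  have vs : v \in s by apply: (subsetP yvs); rewrite !inE eqxx orbT.
  have e2 : gq g t = gq g y + gq g v.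
    rewrite !gqE -qvD; congr qv.
    apply/rowP => j; move/rowP/(_ j): exw; move/rowP/(_ j): et; rewrite !mxE; move=> h1 h2; symmetry; exact: lin_b h1 h2.
  have := u_le1 t us; rewrite e2 dotqD.
  by case: us => h1 _; rewrite !h1 //; lra.
- apply/eqP => xv; move: exw; rewrite -xv addrC => /addr_eq_r hw.
  by have := g_neq0 w F; rewrite hw eqxx.
Qed.

Lemma lin_c (x y z w w' v1 v2 X : int) : x + y = z -> x + w' = v1 ->
  w' = w + X -> y + v1 = v2 -> v2 = w + (z + X).
Proof. lia. Qed.
Lemma lin_d (x y w' v1 t : int) : x + w' = v1 -> t = x + y + w' ->
  y + x + v1 = x + t.
Proof. lia. Qed.
Lemma lin_e (x y v1 v2 t' : int) : t' = y + x + v1 -> y + v1 = v2 ->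
  x + y + v2 = y + t'.
Proof. lia. Qed.

Lemma no_bad n (T : finType) (g : T -> 'rV[int]_n) (C : {set {set T}}) x y w
  (k0 : 'I_n) : toric_fano g C -> valid g C x y w -> g x + g y + g w = 0.
Proof.
move=> F V; apply/eqP; apply/negPn/negP => S0.
have [z [v [exy _ nxy _ _]]] := V.
have ig : injective g by case: F => [[]].
pose A m := g w + g z *+ m.
have inv : forall m, exists w', [/\ g w' = A m, valid g C x y w' &
                                   g x + g y + g w' != 0].
  elim => [|m [w' [ew' V' S']]].
    by exists w; split => //; rewrite /A mulr0n addr0.
  have [t et] := step k0 F V' S'.
  have [v1 [ev1 V1]] := next k0 F V' et.
  have c1 := claim k0 F V' et.
  have S1 : g y + g x + g v1 != 0.
    suff -> : g y + g x + g v1 = g x + g t by [].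
    apply/rowP => j; move/rowP/(_ j): ev1; move/rowP/(_ j): et.
    rewrite !mxE => h1 h2; exact: lin_d h2 h1.
  have [t' et'] := step k0 F V1 S1.
  have [v2 [ev2 V2]] := next k0 F V1 et'.
  have c2 := claim k0 F V1 et'.
  exists v2; split => //.
    rewrite /A mulrS; move: ew'; rewrite /A => ew'.
    apply/rowP => j; move/rowP/(_ j): ev2; move/rowP/(_ j): ev1;
      move/rowP/(_ j): ew'; move/rowP/(_ j): exy.
    rewrite !mxE => h1 h2 h3 h4; exact: lin_c h1 h3 h2 h4.
  suff -> : g x + g y + g v2 = g y + g t' by [].
  apply/rowP => j; move/rowP/(_ j): ev2; move/rowP/(_ j): et'.
  rewrite !mxE => h1 h2; exact: lin_e h1 h2.
have [M [k ch]] := chart_ex k0 (F.1) (sing_in z F).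
have zS : z \in [set z] by rewrite inE.
have injA : forall m1 m2, A m1 = A m2 -> m1 = m2.
  move=> m1 m2 /addrI /(congr1 (fun V => crd M (qv V) 0 (k z))).
  rewrite /= !qvMn !crdMn !mulmxnE -gqE (crd_g _ ch zS) eqxx => /eqP.
  by rewrite eqr_nat => /eqP.
pose f (i : 'I_(#|T|.+1)) := odflt x [pick w' | g w' == A i].
have gf : forall i, g (f i) = A i.
  move=> i; rewrite /f; case: pickP => [w' /eqP // | H].
  by have [w' [ew' _ _]] := inv i; move: (H w'); rewrite ew' eqxx.
have fi : injective f.
  by move=> i j e; apply: ord_inj; apply: injA; rewrite -!gf e.
by have := leq_card f fi; rewrite card_ord ltnn.
Qed.

Lemma ord_ex n (T : finType) (g : T -> 'rV[int]_n) (C : {set {set T}}) (x : T) :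
  toric_fano g C -> exists k0 : 'I_n, True.
Proof.
move=> F; have := sing_in x F; case: F => [[_ _ sm _ _] _] /sm [M [_ h]].
by have [k _] := h x (set11 x); exists k.
Qed.

Lemma rel2_info n (T : finType) (g : T -> 'rV[int]_n) (C : {set {set T}}) x y z :
  toric_fano g C -> prim_rel2 g C x y z ->
  [/\ [set x; y] \notin C, x != y & g x + g y = g z].
Proof.
move=> F [[nC _] _ _ e].
have xy : x != y.
  apply/eqP => xy; move: nC; by rewrite xy setUid (sing_in y F).
split => //; move: e; rewrite big_setU1 ?inE // !big_set1 scale1r //.
Qed.

Lemma deg1_info n (T : finType) (g : T -> 'rV[int]_n) (C : {set {set T}}) x y :
  prim_coll_ord2_deg1 g C [set x; y] -> exists z, prim_rel2 g C x y z.
Proof.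
move=> [c2 [t [a [[pc tC apos e] deg]]]].
have sa : (\sum_(j in t) a j)%N = 1%N.
  by move: deg; rewrite /prim_degree c2; lia.
have [z zt] : exists z, z \in t.
  case: (pickP (mem t)) => [z zt|H]; first by exists z.
  by move: sa; rewrite big_pred0.
move: sa; rewrite (bigD1 z) //= => sa.
have az := apos z zt.
have rest0 : (\sum_(j in t | j != z) a j = 0)%N by lia.
have tz : t = [set z].
  apply/setP => j; rewrite inE; apply/idP/eqP => [jt|->//].
  apply/eqP; apply: contraT => nj; have := apos j jt.
  move/eqP: rest0; rewrite sum_nat_eq0 => /forallP /(_ j) /implyP.
  by rewrite jt nj /= => /(_ isT) /eqP ->.
have azz : a z = 1%N by lia.
exists z; split => //; first by rewrite -tz.
by rewrite e tz !big_set1 azz.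
Qed.

Lemma pair_of (T : finType) (P : {set T}) x : x \in P -> #|P| = 2%N ->
  exists y, P = [set x; y].
Proof.
move=> xP c2; have : #|P :\ x| == 1%N by move: c2; rewrite (cardsD1 x P) xP /=; lia.
by case/cards1P => y e; exists y; rewrite -e setD1K.
Qed.

Lemma lin_f (x y w : int) : x + y + w = 0 -> w = - x - y.
Proof. lia. Qed.
Lemma lin_g (x y w v : int) : x + y + w = 0 -> x + w = v -> v = - y.
Proof. lia. Qed.

Theorem lemma2p3 (n : nat) (T : finType) (g : T -> 'rV[int]_n)
  (C : {set {set T}}) :
  toric_fano g C ->
  (forall x y z w v : T,
     prim_rel2 g C x y z -> prim_rel2 g C x w v -> y != w ->
     g w = - g x - g y /\ g v = - g y) /\
  (forall (x : T) (P1 P2 P3 : {set T}),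
     x \in P1 -> x \in P2 -> x \in P3 ->
     prim_coll_ord2_deg1 g C P1 -> prim_coll_ord2_deg1 g C P2 ->
     prim_coll_ord2_deg1 g C P3 ->
     [\/ P1 = P2, P1 = P3 | P2 = P3]) /\
  (forall x y w : T, y != w ->
     prim_coll_ord2_deg1 g C [set x; y] -> prim_coll_ord2_deg1 g C [set x; w] ->
     (exists2 u, g u = - g w & prim_rel2 g C x y u) /\
     (exists2 u, g u = - g y & prim_rel2 g C x w u)).
Proof.
move=> F.
have ig : injective g by case: F => [[]].
have part1 : forall x y z w v : T,
     prim_rel2 g C x y z -> prim_rel2 g C x w v -> y != w ->
     g w = - g x - g y /\ g v = - g y.
  move=> x y z w v r1 r2 yw.
  have [k0 _] := ord_ex x F.
  have [nxy _ exy] := rel2_info F r1; have [nxw _ exw] := rel2_info F r2.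
  have S : g x + g y + g w = 0 by apply: (no_bad k0 F); exists z, v; split.
  split.
    apply/rowP => j; move/rowP/(_ j): S; rewrite !mxE; exact: lin_f.
  apply/rowP => j; move/rowP/(_ j): S; move/rowP/(_ j): exw; rewrite !mxE => h1 h2.
  exact: lin_g h2 h1.
split; first exact: part1.
split.
  move=> x P1 P2 P3 x1 x2 x3 d1 d2 d3.
  have [y1 e1] := pair_of x1 d1.1; have [y2 e2] := pair_of x2 d2.1.
  have [y3 e3] := pair_of x3 d3.1.
  move: d1 d2 d3; rewrite e1 e2 e3 => d1 d2 d3.
  case: (eqVneq y1 y2) => [-> | n12]; first by constructor 1.
  case: (eqVneq y1 y3) => [-> | n13]; first by constructor 2.
  case: (eqVneq y2 y3) => [-> | n23]; first by constructor 3.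
  have [z1 r1] := deg1_info d1; have [z2 r2] := deg1_info d2.
  have [z3 r3] := deg1_info d3.
  have [h2 _] := part1 _ _ _ _ _ r1 r2 n12.
  have [h3 _] := part1 _ _ _ _ _ r1 r3 n13.
  by move: n23; rewrite (ig _ _ (etrans h2 (esym h3))) eqxx.
move=> x y w yw d1 d2.
have [z r1] := deg1_info d1; have [v r2] := deg1_info d2.
have [ew ev] := part1 _ _ _ _ _ r1 r2 yw.
have [_ _ exy] := rel2_info F r1.
split; [exists z => // | by exists v].
by rewrite ew opprD !opprK exy.
Qed.
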